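(* For $j\in\mathbb{Z}_{\ge0}$, \[ B_j(x)=D(x)\Big[\beta_E(j)^2+x\{\beta_E(j+1)^2-q^{-1}(q^{-1}\lambda^2-1)\beta_E(j)^2\}+q^{-1}x^2\{\beta_E(j+1)-q^{-1}\lambda\,\beta_E(j)\}^2\Big], \] where $B_j(x)=\sum_{l\ge0}\beta_E(l+j)^2x^l$ and $D(x)=\{1-(q^{-1}\lambda^2-1)q^{-1}x+(q^{-1}\lambda^2-1)q^{-2}x^2-q^{-3}x^3\}^{-1}$.
   Context: $F$ is a $p$-adic field with odd residue cardinality $q$, uniformizer $\varpi$. $\pi$ is an irreducible unitary unramified representation of $\mathrm{GL}_2(F)$ with trivial central character, a quotient of $\chi\times\chi^{-1}$ with $\chi$ unramified; $\alpha=\chi(\varpi)$, $\lambda=q^{1/2}(\alpha+\alpha^{-1})\in\mathbb{R}$. $\phi$ is the spherical unit vector, $E$ a quadratic étale algebra over $F$, $\alpha_E(\phi_1,\phi_2)=\int_{F^\times\backslash E^\times}\langle\pi(t)\phi_1,\phi_2\rangle d^\times t$ with $\alpha_E(\phi,\phi)\ne0$, and $\beta_E(l)=\alpha_E(\pi(\mathrm{diag}(\varpi^{-l},1))\phi,\phi)/\alpha_E(\phi,\phi)$, satisfying $q\beta_E(l+2)-\lambda\beta_E(l+1)+\beta_E(l)=0$. *)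

(* Defs.v *)
From Stdlib Require Import Reals Arith.
From Coquelicot Require Import Coquelicot.
Open Scope R_scope.

(* q is a power of an odd prime (residue cardinality of a p-adic field). *)
Definition odd_prime_power (q : nat) : Prop :=
  exists p k : nat, Znumtheory.prime (Z.of_nat p) /\ Nat.odd p = true /\
                    (0 < k)%nat /\ q = (p ^ k)%nat.

Definition satisfies_recurrence (q lambda : R) (beta : nat -> R) : Prop :=
  forall l : nat, q * beta (l + 2)%nat - lambda * beta (l + 1)%nat + beta l = 0.

Definition Dfun (q lambda x : R) : R :=
  / (1 - (/q * lambda ^ 2 - 1) * / q * x
       + (/q * lambda ^ 2 - 1) * / q ^ 2 * x ^ 2
       - / q ^ 3 * x ^ 3).

Definition Pj (q lambda : R) (beta : nat -> R) (j : nat) (x : R) : R :=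
  beta j ^ 2
  + x * (beta (j + 1)%nat ^ 2 - / q * (/ q * lambda ^ 2 - 1) * beta j ^ 2)
  + / q * x ^ 2 * (beta (j + 1)%nat - / q * lambda * beta j) ^ 2.

(* Main.v *)
Require Import Defs.
From Stdlib Require Import Reals Arith Lra Lia Psatz.
From Coquelicot Require Import Coquelicot.
Open Scope R_scope.

Lemma Ls_scal c a l : is_series a l -> is_series (fun n => c * a n) (c * l).
Proof. intro H. exact (is_series_scal c a l H). Qed.
Lemma Ls_plus a b la lb : is_series a la -> is_series b lb ->
  is_series (fun n => a n + b n) (la + lb).
Proof. intros H1 H2. exact (is_series_plus a b la lb H1 H2). Qed.
Lemma Ls_shift (a : nat -> R) (l : R) : is_series a l -> is_series (fun n => a (S n)) (l - a O).
Proof.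
  intro H. apply is_series_incr_1.
  change (plus (l - a O) (a O)) with ((l - a O) + a O).
  replace ((l - a O) + a O) with l by ring. exact H.
Qed.

Lemma sq_rec (q lam : R) (b : nat -> R) : q <> 0 ->
  satisfies_recurrence q lam b -> forall l,
  b (l+3)%nat ^ 2 = (/q*lam^2-1)*/q * b (l+2)%nat ^2
     - (/q*lam^2-1)*/q^2 * b (l+1)%nat ^2 + /q^3 * b l ^2.
Proof.
  intros hq H l.
  assert (e2 : b (l+2)%nat = (lam * b (l+1)%nat - b l)/q).
  { specialize (H l). field_simplify_eq; auto. lra. }
  assert (e3 : b (l+3)%nat = (lam * b (l+2)%nat - b (l+1)%nat)/q).
  { specialize (H (l+1)%nat). replace (l+1+2)%nat with (l+3)%nat in H by lia.
    replace (l+1+1)%nat with (l+2)%nat in H by lia.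
    field_simplify_eq; auto. lra. }
  rewrite e3, e2. field. auto.
Qed.

Lemma bound (q lam : R) (b : nat -> R) : 1 <= q ->
  satisfies_recurrence q lam b -> forall l,
  Rabs (b l) <= Rmax (Rabs (b O)) (Rabs (b 1%nat)) * (Rabs lam + 1) ^ l.
Proof.
  intros hq H.
  set (A := Rmax (Rabs (b O)) (Rabs (b 1%nat))).
  set (M := Rabs lam + 1).
  assert (HM : 1 <= M) by (unfold M; pose proof (Rabs_pos lam); lra).
  assert (HA : 0 <= A) by (unfold A; pose proof (Rabs_pos (b O)); pose proof (Rmax_l (Rabs (b O)) (Rabs (b 1%nat))); lra).
  assert (key : forall l, Rabs (b l) <= A * M ^ l /\ Rabs (b (S l)) <= A * M ^ (S l)).
  { induction l as [|l [IH1 IH2]].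
    - simpl. split.
      + unfold A. pose proof (Rmax_l (Rabs (b O)) (Rabs (b 1%nat))). lra.
      + assert (Rabs (b 1%nat) <= A) by (unfold A; apply Rmax_r).
        rewrite Rmult_1_r. assert (A * 1 <= A * M) by (apply Rmult_le_compat_l; lra). lra.
    - split; auto.
      assert (e2 : b (S (S l)) = (lam * b (S l) - b l)/q).
      { specialize (H l). replace (l+2)%nat with (S (S l)) in H by lia.
        replace (l+1)%nat with (S l) in H by lia.
        field_simplify_eq; lra. }
      rewrite e2.
      assert (hp : 0 <= M ^ l) by (apply pow_le; lra).
      assert (h1 : Rabs ((lam * b (S l) - b l) / q) <= Rabs (lam * b (S l) - b l)).
      { unfold Rdiv. rewrite Rabs_mult, Rabs_inv, (Rabs_right q) by lra.
        pose proof (Rabs_pos (lam * b (S l) - b l)).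
        assert (/q <= 1). { apply Rle_trans with (/1). apply Rinv_le_contravar; lra. lra. }
        assert (0 < /q) by (apply Rinv_0_lt_compat; lra). nra. }
      assert (h2 : Rabs (lam * b (S l) - b l) <= Rabs lam * Rabs (b (S l)) + Rabs (b l)).
      { unfold Rminus. eapply Rle_trans. apply Rabs_triang. rewrite Rabs_mult, Rabs_Ropp. lra. }
      simpl in *. pose proof (Rabs_pos lam).
      assert (Rabs lam * Rabs (b (S l)) <= Rabs lam * (A * (M * M ^ l))) by (apply Rmult_le_compat_l; lra).
      assert (A * M^l * (Rabs lam * M + 1) <= A * M^l * (M*M)).
      { apply Rmult_le_compat_l. nra. unfold M in *. nra. }
      nra. }
  intro l. apply key.
Qed.

Theorem proposition4p3 (q : nat) (lambda : R) (beta : nat -> R) :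
  odd_prime_power q ->
  satisfies_recurrence (INR q) lambda beta ->
  forall j : nat,
  exists r : R, 0 < r /\
    forall x : R, Rabs x < r ->
      is_series (fun l : nat => beta (l + j)%nat ^ 2 * x ^ l)
                (Dfun (INR q) lambda x * Pj (INR q) lambda beta j x).
Proof.
  intros Hq Hrec j.
  assert (hQ : 1 <= INR q).
  { destruct Hq as [p [k [hp [_ [hk ->]]]]].
    apply Znumtheory.prime_ge_2 in hp.
    assert (p <> 0)%nat by lia.
    assert (p ^ k <> 0)%nat by (apply Nat.pow_nonzero; auto).
    apply (le_INR 1). lia. }
  set (Q := INR q) in *.
  assert (hQ0 : Q <> 0) by lra.
  set (c1 := (/Q*lambda^2-1)*/Q).
  set (c2 := (/Q*lambda^2-1)*/Q^2).
  set (c3 := /Q^3).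
  set (A := Rmax (Rabs (beta O)) (Rabs (beta 1%nat))).
  set (M := Rabs lambda + 1).
  assert (HM : 1 <= M) by (unfold M; pose proof (Rabs_pos lambda); lra).
  assert (HA : 0 <= A) by (unfold A; pose proof (Rabs_pos (beta O)); pose proof (Rmax_l (Rabs (beta O)) (Rabs (beta 1%nat))); lra).
  set (K := M^2).
  assert (HK : 1 <= K) by (unfold K; simpl; nra).
  set (C := 1 + Rabs c1 + Rabs c2 + Rabs c3).
  assert (HC : 1 <= C) by (unfold C; pose proof (Rabs_pos c1); pose proof (Rabs_pos c2); pose proof (Rabs_pos c3); lra).
  exists (/ (2 * C * K)).
  assert (hr : 0 < / (2*C*K)) by (apply Rinv_0_lt_compat; nra).
  split; [exact hr|].
  intros x hx.
  assert (hCK : C * K * / (2*C*K) = /2) by (field; split; lra).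
  assert (hx1 : Rabs x <= 1/2).
  { assert (/ (2*C*K) <= /2). { apply Rinv_le_contravar. lra. nra. } lra. }
  assert (hKx : K * Rabs x < 1/2).
  { pose proof (Rabs_pos x). assert (K * Rabs x < K * / (2*C*K)) by (apply Rmult_lt_compat_l; lra).
    assert (K * / (2*C*K) <= C * K * / (2*C*K)) by (apply Rmult_le_compat_r; nra). lra. }
  set (a := fun l : nat => beta (l + j)%nat ^ 2 * x ^ l).
  assert (Hex : ex_series a).
  { apply (ex_series_le a (fun n => (A^2 * M^(2*j)) * (K * Rabs x)^n)).
    - intro n. change (norm (a n)) with (Rabs (a n)). unfold a.
      rewrite Rabs_mult, <- RPow_abs, <- RPow_abs.
      pose proof (bound Q lambda beta hQ Hrec (n+j)) as hb.
      fold A M in hb.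
      rewrite Rpow_mult_distr.
      assert (e : (A * M ^ (n+j))^2 = A^2 * M^(2*j) * K^n).
      { unfold K. rewrite pow_add.
        replace (2*j)%nat with (j*2)%nat by lia. rewrite pow_mult.
        assert (ee : (M^2)^n = (M^n)^2) by (rewrite <- !pow_mult, Nat.mul_comm; reflexivity).
        rewrite ee. ring. }
      assert (Rabs (beta (n+j)%nat) ^2 <= (A * M^(n+j))^2).
      { apply pow_incr. split; [apply Rabs_pos|exact hb]. }
      assert (0 <= Rabs x ^ n) by (apply pow_le; apply Rabs_pos).
      rewrite e in H. nra.
    - apply (ex_series_scal (V := R_NormedModule) (A^2 * M^(2*j))).
      apply ex_series_geom. rewrite Rabs_right. lra. pose proof (Rabs_pos x). nra. }
  set (den := 1 - c1 * x + c2 * x^2 - c3 * x^3).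
  assert (Hden : den <> 0).
  { assert (ed : den = 1 - x * (c1 - c2 * x + c3 * x^2)) by (unfold den; ring).
    assert (hb : Rabs (c1 - c2 * x + c3 * x^2) <= C - 1).
    { unfold Rminus. eapply Rle_trans. apply Rabs_triang.
      eapply Rle_trans. apply Rplus_le_compat_r. apply Rabs_triang.
      rewrite Rabs_Ropp, !Rabs_mult, <- RPow_abs.
      pose proof (Rabs_pos x). pose proof (Rabs_pos c2). pose proof (Rabs_pos c3).
      assert (Rabs c2 * Rabs x <= Rabs c2) by nra.
      assert (Rabs x ^ 2 <= 1) by (simpl; nra).
      assert (Rabs c3 * Rabs x ^ 2 <= Rabs c3 * 1) by (apply Rmult_le_compat_l; lra).
      unfold C. lra. }
    assert (hm : Rabs (x * (c1 - c2 * x + c3 * x^2)) < 1).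
    { rewrite Rabs_mult. pose proof (Rabs_pos x).
      pose proof (Rabs_pos (c1 - c2 * x + c3 * x ^ 2)).
      assert (Rabs x * Rabs (c1 - c2 * x + c3 * x ^ 2) <= Rabs x * C) by nra.
      assert (Rabs x * C <= Rabs x * C * K).
      { rewrite Rmult_assoc. apply Rmult_le_compat_l. lra. nra. }
      assert (Rabs x * (C * K) <= / (2*C*K) * (C * K)) by (apply Rmult_le_compat_r; nra).
      lra. }
    rewrite ed. intro h0. 
    assert (x * (c1 - c2 * x + c3 * x^2) = 1) by lra.
    rewrite H in hm. rewrite Rabs_R1 in hm. lra. }
  set (Sm := Series a).
  assert (Ha : is_series a Sm) by (apply Series_correct; exact Hex).
  pose proof (Ls_shift _ _ Ha) as H1.
  pose proof (Ls_shift _ _ H1) as H2.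
  pose proof (Ls_shift _ _ H2) as H3.
  simpl in H1, H2, H3.
  pose proof (Ls_plus _ _ _ _ (Ls_plus _ _ _ _ (Ls_plus _ _ _ _ H3
      (Ls_scal (- (c1 * x)) _ _ H2)) (Ls_scal (c2 * x^2) _ _ H1))
      (Ls_scal (- (c3 * x^3)) _ _ Ha)) as Hd.
  apply is_series_unique in Hd.
  rewrite (Series_ext _ (fun _ => 0)) in Hd.
  2:{ intro n. unfold a.
      pose proof (sq_rec Q lambda beta hQ0 Hrec (n+j)) as hs.
      replace (S (S (S n)) + j)%nat with (n+j+3)%nat by lia.
      replace (S (S n) + j)%nat with (n+j+2)%nat by lia.
      replace (S n + j)%nat with (n+j+1)%nat by lia.
      rewrite hs. fold c1 c2 c3. simpl. ring. }
  assert (Z0 : Series (fun _ : nat => 0) = 0).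
  { apply is_series_unique. pose proof (Ls_scal 0 _ _ Ha) as Hz.
    rewrite Rmult_0_l in Hz. eapply is_series_ext; [|exact Hz]. intro n; simpl; ring. }
  rewrite Z0 in Hd.
  assert (eS : den * Sm = a O + a 1%nat + a 2%nat - c1 * x * (a O + a 1%nat) + c2 * x^2 * a O).
  { unfold den. lra. }
  replace (Dfun Q lambda x * Pj Q lambda beta j x) with Sm; [exact Ha|].
  unfold Dfun. fold c1 c2 c3. fold den.
  assert (eP : Pj Q lambda beta j x = den * Sm).
  { rewrite eS. unfold a. simpl.
    assert (e2 : beta (S (S j)) = (lambda * beta (S j) - beta j)/Q).
    { specialize (Hrec j). replace (j+2)%nat with (S (S j)) in Hrec by lia.
      replace (j+1)%nat with (S j) in Hrec by lia. field_simplify_eq; auto. lra. }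
    rewrite e2. unfold Pj. replace (j+1)%nat with (S j) by lia.
    unfold c1, c2, c3. field. auto. }
  rewrite eP. field. exact Hden.
Qed.
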